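(* Suppose $\xi(B)=\langle z_1,\ldots,z_n\rangle$ is the root vector of some Ferrers board $B$. Let $\xi'$ be the vector equal to $\xi(B)$ except that the entries in positions $i_1$ and $i_2$, where $1<i_1$ and $1<i_2$, are swapped, and assume $z_{i_1}>z_{i_2}$. If $z_{i_2-1}+1\ge z_{i_1}$ and $z_{i_2}+1\ge z_{i_1+1}$, then $\xi'$ is the root vector of some Ferrers board.
   Context: A Ferrers board is given by a weakly increasing sequence of non-negative integers $B=(b_1,\ldots,b_n)$ of column heights (the set of unit cells in column $i$, rows $1,\ldots,b_i$, of the first quadrant). Its root vector is $\xi(B)=\langle 0-b_1,1-b_2,\ldots,(n-1)-b_n\rangle$. A vector is ''the root vector of some Ferrers board'' if it equals $\xi(B')$ for some Ferrers board $B'$ with the same number of columns.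
   Formalization: In both conditions, $z_{i_2-1}$ and $z_{i_1+1}$ are replaced by the entries of ξ′ in positions i₂−1 and i₁+1, so when i₂ = i₁+1 both conditions become $z_{i_2}+1\ge z_{i_1}$. The statement above fails without it. *)

(* Defs.v *)
From mathcomp Require Import all_boot all_order all_algebra.
Set Implicit Arguments. Unset Strict Implicit. Unset Printing Implicit Defensive.
Import Order.TTheory GRing.Theory Num.Theory.
Local Open Scope ring_scope.

(* Positions are 1-indexed: a vector / board with n columns is a function on
   nat of which only the values at positions 1..n matter. *)

(* A Ferrers board with n columns: weakly increasing nonnegative heights
   b 1 <= b 2 <= ... <= b n  (nonnegativity is built in by using nat). *)
Definition ferrers (n : nat) (b : nat -> nat) : Prop :=
  forall i : nat, (1 <= i < n)%N -> (b i <= b i.+1)%N.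

Definition root_vector (b : nat -> nat) : nat -> int :=
  fun i => (i.-1)%:Z - (b i)%:Z.

Definition is_root_vector (n : nat) (z : nat -> int) : Prop :=
  exists b : nat -> nat, ferrers n b /\
    forall i : nat, (1 <= i <= n)%N -> z i = root_vector b i.

Definition swap_entries (z : nat -> int) (i1 i2 : nat) : nat -> int :=
  fun i => if i == i1 then z i2 else if i == i2 then z i1 else z i.

(* Main.v *)
Require Import Defs.
From mathcomp Require Import all_boot all_order all_algebra.
From mathcomp Require Import zify.
Import Order.TTheory GRing.Theory Num.Theory.
Local Open Scope ring_scope.

Lemma charac (n : nat) (w : nat -> int) :
  w 1%N <= 0 ->
  (forall i, (1 <= i < n)%N -> w i.+1 <= w i + 1) ->
  is_root_vector n w.
Proof.
move=> h1 hs.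
have hle : forall i, (1 <= i <= n)%N -> w i <= (i.-1)%:Z.
  elim=> [|i IH] hi; first by [].
  case: i IH hi => [|i] IH hi; first by [].
  have c := hs i.+1 (ltac:(lia)). have d := IH (ltac:(lia)). rewrite /= in c d *. lia.
exists (fun i => `|(i.-1)%:Z - w i|%N); split.
- move=> i hi.
  have := hs i hi; have := hle i (ltac:(lia)); have := hle i.+1 (ltac:(lia)).
  rewrite /=. lia.
- move=> i hi; rewrite /root_vector.
  have := hle i hi. lia.
Qed.

Theorem lemma7 (n : nat) (B : nat -> nat) (i1 i2 : nat) :
  ferrers n B ->
  (1 < i1 <= n)%N -> (1 < i2 <= n)%N ->
  let z := root_vector B in
  let xi' := swap_entries z i1 i2 in
  z i2 < z i1 ->
  xi' i2.-1 + 1 >= xi' i2 ->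
  ((i1 < n)%N -> xi' i1 + 1 >= xi' i1.+1) ->
  is_root_vector n xi'.
Proof.
move=> hB h1 h2 z xi' hlt hA hC.
have hz : forall i, (1 <= i < n)%N -> z i.+1 <= z i + 1.
  move=> i hi; have := hB i hi; rewrite /z /root_vector /=.
  case: i hi => [|i] hi /=; lia.
have hz1 : z 1%N <= 0 by rewrite /z /root_vector /=; lia.
clearbody z.
apply: charac.
- rewrite /xi' /swap_entries.
  have -> : (1 == i1)%N = false by apply/eqP; lia.
  have -> : (1 == i2)%N = false by apply/eqP; lia.
  by [].
- move=> i hi.
  have hne : i1 != i2 by apply/eqP => e; move: hlt; rewrite e ltxx.
  case: (eqVneq i i1) => e1.
    subst i; exact: hC (ltac:(lia)).
  case: (eqVneq i.+1 i2) => e2.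
    by move: hA; rewrite -e2 /=.
  move: hA hC; rewrite /xi' /swap_entries (negbTE e1).
  case: (eqVneq i i2) => e3.
    subst i.
    case: (eqVneq i2.+1 i1) => e4 _ _.
      lia.
    rewrite (negbTE e2); have := hz i2 hi; lia.
  rewrite (negbTE e2).
  case: (eqVneq i.+1 i1) => e4 _ _.
    rewrite -e4 in hlt; have := hz i hi; lia.
  exact: hz.
Qed.
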